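(* Let $I$ be a non-empty descent set with $s=s(I)$ and Naruse-Newton coefficients $(C_0,\ldots,C_s)$, and let $a,b$ be integers with $s\ge b>a\ge 0$. Then $\frac{C_a(I)}{C_b(I)}=\frac{a!}{b!}$ if and only if $w(I)\ge b$.
   Context: Partitions are drawn as Young diagrams $\mathbb{D}(\lambda)$ in English notation; $c_{i,j}$ is the cell in row $i$, column $j$; $\lambda'$ is the conjugate partition ($\lambda'_j$ = number of cells in column $j$). The hook length $h_\lambda(c)$ is the number of cells of $\mathbb{D}(\lambda)$ weakly right of $c$ in its row or weakly below $c$ in its column (counting $c$ once). For $\mu\subseteq\lambda$, an excited diagram of $\lambda/\mu$ is a subset of $\mathbb{D}(\lambda)$ obtained from $\mathbb{D}(\mu)$ by repeatedly replacing a cell $c_{i,j}\in D$ by $c_{i+1,j+1}$, allowed iff $c_{i+1,j+1}\in\mathbb{D}(\lambda)$ and none of $c_{i,j+1},c_{i+1,j},c_{i+1,j+1}$ lies in $D$; $\mathbb{E}(\lambda/\mu)$ is their set. A ribbon with $n$ cells is read from its lower-left to its upper-right cell, each successive cell directly right of or directly above the previous; it corresponds to the set of $i\in\{1,\ldots,n-1\}$ with cell $i$ directly below cell $i+1$. A descent set is a non-empty finite set $I$ of positive integers; $\lambda^I$ is the unique partition with $\lambda^I_1=\lambda^I_2$ such that the cells $c_{i,j}\in\mathbb{D}(\lambda^I)$ with fewer than three of $c_{i,j+1},c_{i+1,j},c_{i+1,j+1}$ in $\mathbb{D}(\lambda^I)$ form a ribbon corresponding to $I$; this ribbon is $\mathbb{D}(\lambda^I)\setminus\mathbb{D}(\mu^I)$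 for a partition $\mu^I$. Let $s(I)=\lambda^I_1-1$. Naruse-Newton coefficients: every excited diagram of $\lambda^I/\mu^I$ meets row 1 in $\{c_{1,1},\ldots,c_{1,r}\}$, $0\le r\le s$; for $0\le j\le s(I)$, $C_j(I)=\sum_D\prod_{c\in D,\,c\notin\text{row }1}h_{\lambda^I}(c)$, summed over $D\in\mathbb{E}(\lambda^I/\mu^I)$ with exactly $s-j$ cells in row 1. $w(I)$ is the number of integers $j$ with $1\le j\le s(I)+1$ and $(\lambda^I)'_j=2$. *)

(* Defs.v *)
(* Conventions: cells are 0-indexed pairs (row, column);
   the paper's c_{i,j} is our (i-1, j-1). *)
From HB Require Import structures.
From mathcomp Require Import all_boot all_order all_algebra finmap.
Set Implicit Arguments. Unset Strict Implicit. Unset Printing Implicit Defensive.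

Definition is_partition (la : seq nat) : bool :=
  sorted geq la && all (fun x => 0 < x) la.

Definition inD (la : seq nat) (i j : nat) : bool :=
  (i < size la) && (j < nth 0 la i).

Definition rim_cell (la : seq nat) (i j : nat) : bool :=
  inD la i j && (inD la i j.+1 + inD la i.+1 j + inD la i.+1 j.+1 < 3).

(* The set of cells R forms a ribbon corresponding to the descent set I:
   R is enumerated (without repetition) as cells 1..n, each successive cell
   directly right of or directly above the previous one, and
   I = {k in 1..n-1 | cell k is directly below cell k+1}. *)
Definition ribbon_of_descents (R : nat -> nat -> bool) (I : {fset nat}) : Prop :=
  exists p : seq (nat * nat),
    [/\ uniq p,
        (forall i j, ((i, j) \in p) = R i j),
        (forall k, k.+1 < size p ->
           let c := nth (0, 0) p k in let d := nth (0, 0) p k.+1 in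
           ((d.1 == c.1) && (d.2 == c.2.+1)) || ((d.1.+1 == c.1) && (d.2 == c.2)))
      & (forall k, (k \in I) =
           [&& 0 < k, k < size p &
             (let c := nth (0, 0) p k.-1 in let d := nth (0, 0) p k in
              (c.1 == d.1.+1) && (c.2 == d.2))])].

Definition lambdaI (I : {fset nat}) (la : seq nat) : Prop :=
  [/\ is_partition la, nth 0 la 0 = nth 0 la 1 & ribbon_of_descents (rim_cell la) I].

Definition muI (la mu : seq nat) : Prop :=
  is_partition mu /\ (forall i j, inD mu i j = inD la i j && ~~ rim_cell la i j).

Definition sI (la : seq nat) : nat := (nth 0 la 0).-1.

(* conj_part la j = la'_{j+1} = number of cells in (0-indexed) column j *)
Definition conj_part (la : seq nat) (j : nat) : nat := count (fun r => j < r) la.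

Definition wI (la : seq nat) : nat :=
  count (fun j => conj_part la j == 2) (iota 0 (sI la).+1).

Notation cellT la := ('I_(size la) * 'I_(nth 0 la 0))%type.

Definition hook (la : seq nat) (c : cellT la) : nat :=
  #|[set x : cellT la | inD la x.1 x.2 &&
      ((((x.1 : nat) == c.1) && (c.2 <= x.2)) || (((x.2 : nat) == c.2) && (c.1 <= x.1)))]|.

Definition inS (la : seq nat) (D : {set cellT la}) (i j : nat) : bool :=
  [exists x in D, ((x.1 : nat) == i) && ((x.2 : nat) == j)].

Definition exc_allowed (la : seq nat) (D : {set cellT la}) (c : cellT la) : bool :=
  [&& inD la c.1.+1 c.2.+1, ~~ inS D c.1 c.2.+1, ~~ inS D c.1.+1 c.2
    & ~~ inS D c.1.+1 c.2.+1].

Definition exc_step (la : seq nat) : rel {set cellT la} := fun D E =>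
  [exists c in D, exc_allowed D c &&
     (E == [set x : cellT la | ((x \in D) && (x != c)) ||
                    (((x.1 : nat) == c.1.+1) && ((x.2 : nat) == c.2.+1))])].

Definition Dmu (la mu : seq nat) : {set cellT la} := [set x : cellT la | inD mu x.1 x.2].

Definition excited (la mu : seq nat) (D : {set cellT la}) : bool :=
  connect (@exc_step la) (Dmu la mu) D.

Definition NN (la mu : seq nat) (j : nat) : nat :=
  \sum_(D : {set cellT la} |
          excited mu D && (#|[set x in D | (x.1 : nat) == 0]| == sI la - j))
     \prod_(c in D | (c.1 : nat) != 0) hook c.

(* Main.v *)
Require Import Defs.
From HB Require Import structures.
From mathcomp Require Import all_boot all_order all_algebra finmap zify.
Set Implicit Arguments. Unset Strict Implicit. Unset Printing Implicit Defensive.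

Module P1.
Section Excited.
Variable la : seq nat.
Hypothesis Hpart : is_partition la.

Definition lam i := nth 0 la i.

Lemma lam_mono i j : i <= j -> lam j <= lam i.
Proof.
move=> Hij; rewrite /lam.
case: (ltnP j (size la)) => Hj; last by rewrite nth_default.
have Hi : i < size la by apply: leq_ltn_trans Hj.
case/andP: Hpart => Hs _.
have := sorted_leq_nth (leT := geq) _ _ 0 Hs.
apply => //; [ move=> x y z /=; lia | move=> x /=; lia ].
Qed.

Lemma inDE i j : inD la i j = (j < lam i).
Proof.
rewrite /inD /lam; case: ltnP => //= H; by rewrite nth_default.
Qed.

Lemma lam_size i : 0 < lam i -> i < size la.
Proof. rewrite /lam => H; case: (ltnP i (size la)) => // H'; move: H; by rewrite nth_default. Qed.

Lemma count_iota_int a b n : count (fun z => a <= z < b) (iota 0 n) = minn n b - minn n a.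
Proof.
elim: n => [|n IH]; first by rewrite /= !min0n.
rewrite -addn1 iotaD count_cat IH /= addn0. lia.
Qed.

Lemma card_ord_int n a b : b <= n -> #|[set z : 'I_n | a <= z < b]| = b - a.
Proof.
move=> Hb.
rewrite cardE /enum_mem -enumT /=.
have -> : size [seq x <- enum 'I_n | x \in [set z : 'I_n | a <= z < b]] =
          count (fun z => a <= z < b) (map val (enum 'I_n)).
  by rewrite size_filter count_map; apply: eq_count => z; rewrite inE.
rewrite val_enum_ord count_iota_int; lia.
Qed.


Notation cell := (cellT la).

Lemma cell_eq (x y : cell) : (x == y) = (((x.1 : nat) == y.1) && ((x.2 : nat) == y.2)).
Proof. by case: x y => [a b] [c d]; rewrite xpair_eqE. Qed.

Lemma inS_mem (D : {set cell}) (x : cell) : inS D x.1 x.2 = (x \in D).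
Proof.
apply/existsP/idP => [[y /andP [Hy /andP [/eqP H1 /eqP H2]]]|Hx].
  suff -> : x = y by []. by apply/eqP; rewrite cell_eq H1 H2 !eqxx.
by exists x; rewrite Hx !eqxx.
Qed.

Lemma inS_box (D : {set cell}) i j : inS D i j -> (i < size la) && (j < lam 0).
Proof. by case/existsP => x /and3P [_ /eqP <- /eqP <-]; rewrite !ltn_ord. Qed.

Lemma inS_ext (D E : {set cell}) : (forall i j, inS D i j = inS E i j) -> D = E.
Proof. move=> H; apply/setP => x; by rewrite -!inS_mem H. Qed.

Definition mkcell i j (Hi : i < size la) (Hj : j < lam 0) : cell := (Ordinal Hi, Ordinal Hj).

Lemma inS_pred (p : nat -> nat -> bool) i j :
  inS [set x : cell | p x.1 x.2] i j = [&& i < size la, j < lam 0 & p i j].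
Proof.
apply/existsP/idP => [[y /and3P [Hy /eqP H1 /eqP H2]]|/and3P [Hi Hj Hp]].
  by move: Hy; rewrite inE -H1 -H2 !ltn_ord.
by exists (mkcell Hi Hj); rewrite inE /= Hp !eqxx.
Qed.

Lemma inD_box i j : j < lam i -> (i < size la) && (j < lam 0).
Proof.
move=> H; rewrite (lam_size (leq_ltn_trans (leq0n _) H)) /=.
by apply: leq_trans H (lam_mono (leq0n _)).
Qed.

Lemma inS_get (D : {set cell}) i j : inS D i j -> exists2 x : cell, x \in D & ((x.1 : nat) = i) /\ ((x.2 : nat) = j).
Proof. by case/existsP => x /and3P [Hx /eqP H1 /eqP H2]; exists x. Qed.

Lemma stepP (D E : {set cell}) :
  exc_step D E <-> exists i j, [/\ inS D i j, j.+1 < lam i.+1, [&& ~~ inS D i j.+1,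
     ~~ inS D i.+1 j & ~~ inS D i.+1 j.+1] &
     forall a b, inS E a b = (inS D a b && ~~ ((a == i) && (b == j))) || ((a == i.+1) && (b == j.+1))].
Proof.
split.
  case/existsP => c /and3P [Hc /and4P [H1 H2 H3 H4] /eqP HE].
  exists c.1, c.2; split; [by rewrite inS_mem | by rewrite -inDE | by rewrite H2 H3 H4 | move=> a b].
  rewrite HE.
  have -> : [set x : cell | (x \in D) && (x != c) || ((x.1 : nat) == c.1.+1) && ((x.2 : nat) == c.2.+1)]
     = [set x : cell | (inS D x.1 x.2 && ~~ (((x.1 : nat) == c.1) && ((x.2 : nat) == c.2)))
                      || (((x.1 : nat) == c.1.+1) && ((x.2 : nat) == c.2.+1))].
    by apply/setP => x; rewrite !inE inS_mem cell_eq.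
  rewrite (inS_pred (fun u v => (inS D u v && ~~ ((u == c.1) && (v == c.2))) || ((u == c.1.+1) && (v == c.2.+1)))).
  case Ha: (inS D a b) => /=.
    by move/inS_box: Ha => /andP [-> ->].
  case Hab: ((a == c.1.+1) && (b == c.2.+1)); rewrite ?andbF //.
  case/andP: Hab => /eqP -> /eqP ->.
  by move: H1; rewrite inDE => /inD_box /andP [-> ->].
case=> i [j [Hij H1 /and3P [H2 H3 H5] H4]].
case: (inS_get Hij) => c Hc [Ci Cj].
apply/existsP; exists c; rewrite Hc /=.
apply/andP; split.
  by rewrite /exc_allowed inDE Ci Cj H1 H2 H3 H5.
apply/eqP; apply: inS_ext => a b.
rewrite H4 -Ci -Cj.
have -> : [set x : cell | (x \in D) && (x != c) || ((x.1 : nat) == c.1.+1) && ((x.2 : nat) == c.2.+1)]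
     = [set x : cell | (inS D x.1 x.2 && ~~ (((x.1 : nat) == c.1) && ((x.2 : nat) == c.2)))
                      || (((x.1 : nat) == c.1.+1) && ((x.2 : nat) == c.2.+1))].
  by apply/setP => x; rewrite !inE inS_mem cell_eq.
rewrite (inS_pred (fun u v => (inS D u v && ~~ ((u == c.1) && (v == c.2))) || ((u == c.1.+1) && (v == c.2.+1)))) .
case Ha: (inS D a b) => /=.
  by move/inS_box: Ha => /andP [-> ->].
case Hab: ((a == c.1.+1) && (b == c.2.+1)); rewrite ?andbF //.
case/andP: Hab => /eqP -> /eqP ->.
by move: H1; rewrite -Ci -Cj => /inD_box /andP [-> ->].
Qed.

Lemma conn_ind (T : finType) (e : rel T) (x0 : T) (P : T -> Prop) :
  P x0 -> (forall y z, connect e x0 y -> P y -> e y z -> P z) ->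
  forall y, connect e x0 y -> P y.
Proof.
move=> H0 HS y /connectP [p Hp ->].
elim/last_ind: p Hp => [//|p z IH].
rewrite rcons_path => /andP [Hp Hz]; rewrite last_rcons.
apply: HS (IH Hp) Hz.
by apply/connectP; exists p.
Qed.

Definition mrow k := (lam k.+1).-1.
Definition Z k : {set cell} := [set x : cell | (k <= x.1) && (x.2.+1 < lam x.1.+1)].
Definition Rk k (D : {set cell}) := connect (@exc_step la) (Z k) D.

Lemma inS_Z k a b : inS (Z k) a b = (k <= a) && (b.+1 < lam a.+1).
Proof.
rewrite (inS_pred (fun u v => (k <= u) && (v.+1 < lam u.+1))).
case H: (b.+1 < lam a.+1); last by rewrite !andbF.
have /inD_box/andP [Ha Hb] : b < lam a by apply: leq_trans (ltnW H) (lam_mono (leqnSn a)).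
by rewrite Ha Hb andbT.
Qed.

Lemma Rk_cells k D : Rk k D -> forall a b, inS D a b -> (k <= a) && (b < lam a).
Proof.
move: D; apply: conn_ind.
  move=> a b; rewrite inS_Z => /andP [-> H] /=.
  by apply: leq_trans (ltnW H) (lam_mono (leqnSn a)).
move=> D E _ IH /stepP [i [j [Hij H1 _ HE]]] a b.
rewrite HE => /orP [/andP [Hab _]|/andP [/eqP -> /eqP ->]]; first exact: IH.
case/andP: (IH _ _ Hij) => Hk _.
by rewrite H1 andbT; apply: leq_trans Hk _.
Qed.

Definition DEC k t (D' D : {set cell}) := forall a b,
  inS D a b = [|| (a == k) && (b < t), (a == k.+1) && (t < b <= mrow k) | inS D' a b].
Definition colbound k t (D' : {set cell}) := forall b, inS D' k.+1 b -> b < t.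

Lemma fwd k D : Rk k D -> exists t D', [/\ t <= mrow k, Rk k.+1 D', colbound k t D' & DEC k t D' D].
Proof.
move: D; apply: conn_ind.
  exists (mrow k), (Z k.+1); split => //.
  - by rewrite /Rk connect0.
  - move=> b; rewrite inS_Z /mrow => /andP [_ H].
    have := lam_mono (leqnSn k.+1); lia.
  - move=> a b; rewrite !inS_Z /mrow.
    case: (ltngtP k a) => [Hlt|Hgt|<-]; lia.
move=> D E _ [t [D' [Ht HR Hcol Hdec]]] /stepP [i [j [Hij H1 /and3P [H2 H3 H4] HE]]].
have cellsD' := Rk_cells HR.
have subD' : forall a b, inS D' a b -> inS D a b by move=> a b Hab; rewrite Hdec Hab !orbT.
move: (Hdec i j); rewrite Hij => /esym /or3P [/andP [/eqP Ei Ej]|/andP [/eqP Ei Ej]|HD'].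
-
  subst i.
  have Hjt : t = j.+1.
    move: H2; rewrite Hdec eqxx /=; lia.
  subst t.
  exists j, D'; split => //.
  + move: H1; rewrite /mrow; lia.
  + move=> b Hb; have := Hcol b Hb.
    case: (b =P j) => [Ebj|]; last by lia.
    by move: H3; rewrite Hdec -Ebj Hb !orbT.
  + move=> a b; rewrite HE Hdec.
    have := cellsD' a b; case: (inS D' a b) => /= Hc.
      have := Hc isT; lia.
    move: H1; rewrite /mrow; lia.
- (* moved cell in row k+1 cannot move *)
  subst i; exfalso.
  case: (ltnP j (mrow k)) => Hj.
    by move: H2; rewrite Hdec (_ : (k.+1 == k.+1) = true) ?eqxx //= orbC /=; lia.
  have := lam_mono (leqnSn k.+1); move: H1 Ej Hj; rewrite /mrow; lia.
-
  pose E' := [set x : cell | (inS D' x.1 x.2 && ~~ (((x.1 : nat) == i) && ((x.2 : nat) == j)))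
                      || (((x.1 : nat) == i.+1) && ((x.2 : nat) == j.+1))].
  have HE' : forall a b, inS E' a b = (inS D' a b && ~~ ((a == i) && (b == j))) || ((a == i.+1) && (b == j.+1)).
    move=> a b; rewrite /E' (inS_pred (fun u v => (inS D' u v && ~~ ((u == i) && (v == j))) || ((u == i.+1) && (v == j.+1)))).
    case Ha: (inS D' a b) => /=.
      by move/inS_box: Ha => /andP [-> ->].
    case Hab: ((a == i.+1) && (b == j.+1)); rewrite ?andbF //.
    case/andP: Hab => /eqP -> /eqP ->.
    by move/inD_box: H1 => /andP [-> ->].
  have Hst : exc_step D' E'.
    apply/stepP; exists i, j; split => //.
    apply/and3P; split; apply/negP => /subD'; by apply/negP.
  have Hki : k.+1 <= i by case/andP: (cellsD' _ _ HD').
  exists t, E'; split => //.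
  + by apply: connect_trans HR (connect1 Hst).
  + move=> b; rewrite HE' => /orP [/andP [Hb _]|/andP [/eqP Hi _]]; first exact: Hcol.
    lia.
  + move=> a b; rewrite HE Hdec HE'.
    have := cellsD' a b.
    have Hcj : i = k.+1 -> j < t by move=> Ei; apply: Hcol; rewrite -Ei.
    case: (inS D' a b) => /= Hc.
      have := Hc isT; lia.
    lia.
Qed.

Lemma inS_U (A B : {set cell}) a b : inS (A :|: B) a b = inS A a b || inS B a b.
Proof.
apply/existsP/orP => [[x /and3P [Hx H1 H2]]|[/existsP [x /and3P [Hx H1 H2]]|/existsP [x /and3P [Hx H1 H2]]]].
- by move: Hx; rewrite inE => /orP [Hx|Hx]; [left|right]; apply/existsP; exists x; rewrite Hx H1 H2.
- by exists x; rewrite inE Hx H1 H2.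
- by exists x; rewrite inE Hx H1 H2 orbT.
Qed.

Definition PM k t : {set cell} :=
  [set x : cell | (((x.1 : nat) == k) && (x.2 < t)) || (((x.1 : nat) == k.+1) && (t < x.2 <= mrow k))].
Definition dec k t (D' : {set cell}) := PM k t :|: D'.

Lemma inS_PM k t a b : t <= mrow k ->
  inS (PM k t) a b = ((a == k) && (b < t)) || ((a == k.+1) && (t < b <= mrow k)).
Proof.
move=> Ht.
rewrite (inS_pred (fun u v => ((u == k) && (v < t)) || ((u == k.+1) && (t < v <= mrow k)))).
case/boolP: (((a == k) && (b < t)) || ((a == k.+1) && (t < b <= mrow k))) => H; last by rewrite !andbF.
rewrite andbT; case/orP: H => /andP [/eqP -> H].
  apply: inD_box; apply: leq_trans (lam_mono (leqnSn k)); move: Ht H; rewrite /mrow; lia.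
apply: inD_box; move: Ht H; rewrite /mrow; lia.
Qed.

Lemma DEC_dec k t D' : t <= mrow k -> DEC k t D' (dec k t D').
Proof. by move=> Ht a b; rewrite inS_U inS_PM // orbA. Qed.

Lemma DEC_eq k t D' D : t <= mrow k -> DEC k t D' D -> D = dec k t D'.
Proof. by move=> Ht H; apply: inS_ext => a b; rewrite H (DEC_dec D' Ht). Qed.

Lemma DEC_Z k : DEC k (mrow k) (Z k.+1) (Z k).
Proof. move=> a b; rewrite !inS_Z /mrow; case: (ltngtP k a) => [Hlt|Hgt|<-]; lia. Qed.

Lemma bwd k t D' : t <= mrow k -> Rk k.+1 D' -> colbound k t D' -> Rk k (dec k t D').
Proof.
move=> Ht HR Hcol.
have cellsD' := Rk_cells HR.
have step1 : Rk k (dec k (mrow k) D').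
  move: D' HR {Hcol cellsD'}; apply: conn_ind.
    by rewrite -(DEC_eq (leqnn _) (DEC_Z k)) /Rk connect0.
  move=> D' E' HR IH /stepP [i [j [Hij H1 /and3P [H2 H3 H4] HE]]].
  apply: connect_trans IH (connect1 _).
  have Hki : k.+1 <= i by case/andP: (Rk_cells HR Hij).
  apply/stepP; exists i, j; rewrite !(DEC_dec _ (leqnn _)) Hij.
  split; [by rewrite !orbT | done | rewrite (negbTE H2) (negbTE H3) (negbTE H4) !orbF; lia | move=> a b]. rewrite !(DEC_dec _ (leqnn _)) HE; lia.
suff H : forall n, n <= mrow k - t -> Rk k (dec k (mrow k - n) D').
  by have := H (mrow k - t) (leqnn _); rewrite (_ : mrow k - (mrow k - t) = t) //; lia.
elim => [_|n IH Hn]; first by rewrite subn0.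
apply: connect_trans (IH (ltnW Hn)) (connect1 _).
set u := mrow k - n.+1.
have Hu : mrow k - n = u.+1 by rewrite /u; lia.
have Htu : t <= u by rewrite /u; lia.
have Hum : u.+1 <= mrow k by rewrite /u; lia.
rewrite Hu.
have HDu : DEC k u.+1 D' (dec k u.+1 D') := DEC_dec D' Hum.
have HDu' : DEC k u D' (dec k u D') := DEC_dec D' (ltnW Hum).
have Hc1 : forall a b, inS D' a b -> k.+1 <= a by move=> a b /cellsD' /andP [].
have Hc2 : forall a b, inS D' a b -> a = k.+1 -> b < t by move=> a b H Ea; apply: Hcol; rewrite -Ea.
apply/stepP; exists k, u; rewrite !HDu; split.
- by rewrite eqxx ltnSn.
- move: Hum; rewrite /mrow; lia.
- have := Hc1 k u.+1; have := Hc2 k.+1 u; have := Hc2 k.+1 u.+1.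
  case: (inS D' k u.+1); case: (inS D' k.+1 u); case: (inS D' k.+1 u.+1) => /=; lia.
- move=> a b; rewrite HDu' HDu.
  have := Hc1 a b; have := Hc2 a b.
  case: (inS D' a b) => /=; lia.
Qed.

Definition rowc k (D : {set cell}) := #|[set x in D | (x.1 : nat) == k]|.

Lemma card_row_int k a b : k < size la -> b <= lam 0 ->
  #|[set x : cell | ((x.1 : nat) == k) && (a <= x.2 < b)]| = b - a.
Proof.
move=> Hk Hb.
have -> : [set x : cell | ((x.1 : nat) == k) && (a <= x.2 < b)] =
          setX [set y : 'I_(size la) | k <= y < k.+1] [set z : 'I_(lam 0) | a <= z < b].
  by apply/setP => -[y z]; rewrite !inE /= ltnS -eqn_leq eq_sym.
by rewrite cardsX !card_ord_int // subSnn mul1n.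
Qed.

Lemma rowc_dec k t D' : t <= mrow k -> (forall a b, inS D' a b -> k.+1 <= a) -> rowc k (dec k t D') = t.
Proof.
move=> Ht Hc; rewrite /rowc.
have -> : [set x in dec k t D' | (x.1 : nat) == k] = [set x : cell | ((x.1 : nat) == k) && (0 <= x.2 < t)].
  apply/setP => x; rewrite [in LHS]inE -inS_mem (DEC_dec D' Ht) [in RHS]inE /=.
  have := Hc x.1 x.2; case: (inS D' x.1 x.2) => /=; lia.
case: t Ht => [|t] Ht.
  by apply/eqP; rewrite cards_eq0; apply/eqP/setP => x; rewrite !inE; lia.
rewrite card_row_int ?subn0 //.
  apply: lam_size; have := lam_mono (leqnSn k); move: Ht; rewrite /mrow; lia.
apply: leq_trans (lam_mono (leq0n k.+1)); move: Ht; rewrite /mrow; lia.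
Qed.

Lemma colbound_rowc k t D' : Rk k.+1 D' -> colbound k t D' <-> (rowc k.+1 D' <= t).
Proof.
move=> HR; case: (fwd HR) => t1 [D'' [Ht1 HR' Hcol' Hdec]].
have Hc := Rk_cells HR'.
rewrite (DEC_eq Ht1 Hdec) rowc_dec //; last by move=> a b /Hc /andP [].
split => [H|H b].
  case: (leqP t1 t) => // Hlt; exfalso.
  have := H t; rewrite (DEC_dec _ Ht1) eqxx Hlt /=; lia.
rewrite (DEC_dec _ Ht1) => /or3P [/andP [_ Hb]|/andP [Hb _]|Hb]; try lia.
by have := Hc _ _ Hb; lia.
Qed.

Lemma sum_dec k t (F : {set cell} -> nat) : t <= mrow k ->
  \sum_(D | Rk k D && (rowc k D == t)) F D =
  \sum_(D' | Rk k.+1 D' && (rowc k.+1 D' <= t)) F (dec k t D').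
Proof.
move=> Ht.
set SR := [set D' | Rk k.+1 D' && (rowc k.+1 D' <= t)].
have inj : {in SR &, injective (dec k t)}.
  move=> D1 D2; rewrite !inE => /andP [HR1 /(colbound_rowc t HR1) Hc1] /andP [HR2 /(colbound_rowc t HR2) Hc2] Heq.
  apply: inS_ext => a b.
  have := DEC_dec D1 Ht a b; have := DEC_dec D2 Ht a b; rewrite Heq.
  have := Rk_cells HR1 (a:=a) (b:=b); have := Rk_cells HR2 (a:=a) (b:=b).
  have Hd1 : inS D1 a b -> a = k.+1 -> b < t by move=> H Ea; apply: Hc1; rewrite -Ea.
  have Hd2 : inS D2 a b -> a = k.+1 -> b < t by move=> H Ea; apply: Hc2; rewrite -Ea.
  move: Hd1 Hd2; case: (inS D1 a b); case: (inS D2 a b); case: (inS (dec k t D2) a b) => /=;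
    move=> *; try lia.
rewrite [RHS](eq_bigl (fun D' => D' \in SR)); last by move=> D'; rewrite inE.
rewrite -(big_imset F inj); apply: eq_bigl => D.
apply/andP/imsetP => [[HR /eqP Hrow]|[D' HD' ->]].
  case: (fwd HR) => t0 [D' [Ht0 HR' Hcol HD]].
  have Hc : forall a b, inS D' a b -> k.+1 <= a by move=> a b /(Rk_cells HR') /andP [].
  move: Hrow; rewrite (DEC_eq Ht0 HD) rowc_dec // => Et; subst t0.
  exists D' => //; rewrite inE HR' /=; by apply/colbound_rowc.
move: HD'; rewrite inE => /andP [HR' Hr].
have Hc : forall a b, inS D' a b -> k.+1 <= a by move=> a b /(Rk_cells HR') /andP [].
split; first by apply: bwd => //; apply/colbound_rowc.
by rewrite rowc_dec.
Qed.

Definition leg i j := #|[set y : 'I_(size la) | (i < y) && (j < lam y)]|.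
Definition hk i j := lam i - j + leg i j.

Lemma hookE (x : cell) : x.2 < lam x.1 -> hook x = hk x.1 x.2.
Proof.
move=> Hx; rewrite /hook /hk.
set A := [set y : cell | ((y.1 : nat) == x.1) && (x.2 <= y.2 < lam x.1)].
set B := setX [set y : 'I_(size la) | (x.1 < y) && (x.2 < lam y)] [set z : 'I_(nth 0 la 0) | x.2 <= z < x.2.+1].
have -> : [set y : cell | inD la y.1 y.2 && ((((y.1 : nat) == x.1) && (x.2 <= y.2)) || (((y.2 : nat) == x.2) && (x.1 <= y.1)))] = A :|: B.
  apply/setP => -[y z]; rewrite !inE inDE /=.
  case: (eqVneq (y : nat) x.1) => [E|NE].
    rewrite E; lia.
  lia.
rewrite cardsU.
have -> : A :&: B = set0.
  apply/setP => -[y z]; rewrite !inE /=; lia.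
rewrite cards0 subn0 cardsX card_ord_int // subSnn muln1.
rewrite card_row_int //; last by apply: lam_mono.
Qed.

Lemma hk_pos i j : j < lam i -> 0 < hk i j.
Proof. rewrite /hk; lia. Qed.

Definition W (D : {set cell}) := \prod_(c in D) hook c.

Lemma W_pos D : (forall a b, inS D a b -> b < lam a) -> 0 < W D.
Proof.
move=> H; apply: prodn_cond_gt0 => c Hc.
have Hl : c.2 < lam c.1 by apply: H; rewrite inS_mem.
by rewrite hookE // hk_pos.
Qed.

Lemma W_U A B : A :&: B = set0 -> W (A :|: B) = W A * W B.
Proof.
move=> H; rewrite /W (big_setID A).
have -> : (A :|: B) :&: A = A by apply/setP => x; rewrite !inE; case: (x \in A); rewrite ?andbF ?andbT ?orbT.
have -> : (A :|: B) :\: A = B.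
  apply/setP => x; rewrite !inE.
  have : x \in A :&: B = false by rewrite H inE.
  rewrite !inE.
  by case: (x \in A); case: (x \in B).
by [].
Qed.

Lemma W_set1 (e : cell) (A : {set cell}) : e \notin A -> W (e |: A) = hook e * W A.
Proof. by move=> H; rewrite /W big_setU1. Qed.

Lemma set1_coord (e : cell) : [set x : cell | ((x.1 : nat) == e.1) && ((x.2 : nat) == e.2)] = [set e].
Proof. by apply/setP => x; rewrite !inE cell_eq. Qed.

Lemma W_PM_step k t : t < mrow k -> W (PM k t) * hk k t = W (PM k t.+1) * hk k.+1 t.+1.
Proof.
move=> Ht.
have H1 : t.+1 < lam k.+1 by move: Ht; rewrite /mrow; lia.
have H0 : t < lam k by apply: leq_trans (ltnW H1) (lam_mono (leqnSn k)).
case/andP: (inD_box H1) => B1 B1'. case/andP: (inD_box H0) => B0 B0'.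
pose e0 := mkcell B0 B0'. pose e1 := mkcell B1 B1'.
have He0 : hook e0 = hk k t by rewrite hookE.
have He1 : hook e1 = hk k.+1 t.+1 by rewrite hookE.
have Hn0 : e0 \notin PM k t by rewrite -inS_mem inS_PM /=; [lia | apply: ltnW].
have Hn1 : e1 \notin PM k t.+1 by rewrite -inS_mem inS_PM /=; [lia | done].
have Heq : e0 |: PM k t = e1 |: PM k t.+1.
  apply: inS_ext => a b.
  rewrite -!set1_coord !inS_U !inS_PM //=; last by apply: ltnW.
  rewrite !(inS_pred (fun u v => (u == _) && (v == _))).
  case: (eqVneq a k) => [->|Na]; case: (eqVneq a k.+1) => [Ea|Na1] //=; try lia.
by rewrite mulnC -He0 -W_set1 // Heq W_set1 // He1 mulnC.
Qed.

Definition T k t := \sum_(D | Rk k D && (rowc k D == t)) W D.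
Definition U k t := \sum_(D | Rk k D && (rowc k D <= t)) W D.

Lemma PM_disj k t D' : t <= mrow k -> Rk k.+1 D' -> rowc k.+1 D' <= t -> PM k t :&: D' = set0.
Proof.
move=> Ht HR /(colbound_rowc t HR) Hc.
apply/setP => x; rewrite in_setI in_set0 -!inS_mem inS_PM //.
have := Rk_cells HR (a:=x.1) (b:=x.2).
have Hd : inS D' x.1 x.2 -> (x.1 : nat) = k.+1 -> x.2 < t by move=> H E; apply: Hc; rewrite -E.
move: Hd; case: (inS D' x.1 x.2) => /=; last by rewrite andbF.
move=> Hd Hcl; have := Hcl isT; have := Hd isT; lia.
Qed.

Lemma Tdec k t : t <= mrow k -> T k t = W (PM k t) * U k.+1 t.
Proof.
move=> Ht; rewrite /T sum_dec // /U big_distrr; apply: eq_bigr => D' /andP [HR Hr].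
by rewrite /dec W_U // PM_disj.
Qed.

Lemma U_S k t : U k t.+1 = U k t + T k t.+1.
Proof.
rewrite /U /T (bigID (fun D => rowc k D <= t)) /=; congr (_ + _); apply: eq_bigl => D.
  by case: (Rk k D) => //=; lia.
by case: (Rk k D) => //=; lia.
Qed.

Lemma U_0 k : U k 0 = T k 0.
Proof. by rewrite /U /T; apply: eq_bigl => D; rewrite leqn0. Qed.

Lemma rowc_le k D : Rk k D -> rowc k D <= mrow k.
Proof.
move=> HR; case: (fwd HR) => t [D' [Ht HR' _ HD]].
rewrite (DEC_eq Ht HD) rowc_dec // => a b /(Rk_cells HR') /andP [] //.
Qed.

Lemma T_out k t : mrow k < t -> T k t = 0.
Proof.
move=> Ht; rewrite /T big_pred0 // => D; apply/negP => /andP [HR /eqP Hr].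
by have := rowc_le HR; rewrite Hr leqNgt Ht.
Qed.

Lemma leg_mono i j j' : j <= j' -> leg i j' <= leg i j.
Proof.
move=> H; apply: subset_leq_card; apply/subsetP => y; rewrite !inE => /andP [-> /=]; lia.
Qed.

Lemma leg_zero i j : lam i.+1 <= j -> leg i j = 0.
Proof.
move=> H; apply/eqP; rewrite cards_eq0; apply/eqP/setP => y; rewrite !inE.
case Hy: (i < y) => //=.
have := lam_mono Hy; lia.
Qed.

Lemma star_of k :
  (forall r, r < mrow k.+1 -> leg k.+1 r.+1 * U k.+1 r + (0 < U k.+1 r) <= (lam k.+1 - r - 1) * T k.+1 r.+1) ->
  forall t, t < mrow k -> hk k t * T k t <= (lam k - t - 1) * T k t.+1.
Proof.
move=> IH t Ht.
rewrite !Tdec //; last exact: ltnW.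
rewrite mulnA [hk k t * _]mulnC W_PM_step // -mulnA.
rewrite (mulnCA (lam k - t - 1)) leq_mul2l; apply/orP; right.
rewrite U_S /hk.
have Hm := lam_mono (leqnSn k).
case: (ltnP t (mrow k.+1)) => Ht'.
  have := IH t Ht'.
  have -> : lam k.+1 - t - 1 = lam k.+1 - t.+1 by lia.
  have Hab : lam k.+1 - t.+1 <= lam k - t - 1 by lia.
  move=> H; rewrite mulnDl mulnDr.
  apply: leq_trans (_ : _ <= (lam k.+1 - t.+1) * U k.+1 t + (lam k.+1 - t.+1) * T k.+1 t.+1) _.
    rewrite leq_add2l; apply: leq_trans H; apply: leq_addr.
  by apply: leq_add; apply: leq_mul.
rewrite leg_zero; last by move: Ht'; rewrite /mrow; lia.
nia.
Qed.

Lemma dstar_of k :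
  (forall t, t < mrow k -> hk k t * T k t <= (lam k - t - 1) * T k t.+1) ->
  forall r, r < mrow k -> leg k r.+1 * U k r + (0 < U k r) <= (lam k - r - 1) * T k r.+1.
Proof.
move=> S r Hr.
set l := leg k r.+1.
have Hhk : forall q, q <= r.+1 -> lam k - q + l <= hk k q.
  by move=> q Hq; rewrite /hk leq_add2l leg_mono.
have Hlam : r.+1 < lam k.
  by apply: leq_trans (lam_mono (leqnSn k)); move: Hr; rewrite /mrow; lia.
suff : forall q, q <= r -> l * U k q + (0 < U k q) <= (lam k - q - 1) * T k q.+1 by apply.
elim => [_|q IH Hq].
  rewrite U_0.
  have := S 0 (leq_ltn_trans (leq0n r) Hr); have := Hhk 0 isT.
  have : ((0 < T k 0) : nat) <= T k 0 by case: (T k 0).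
  nia.
have := IH (ltnW Hq); have := S q.+1 (leq_ltn_trans Hq Hr); have := Hhk q.+1 (leqW Hq).
rewrite U_S.
case: (posnP (U k q)) => HU.
  rewrite HU /= add0n muln0 !add0n.
  have : ((0 < T k q.+1) : nat) <= T k q.+1 by case: (T k q.+1).
  nia.
rewrite (_ : 0 < U k q + T k q.+1); last by apply: leq_trans HU (leq_addr _ _).
nia.
Qed.

Lemma main_rec k :
  (forall t, t < mrow k -> hk k t * T k t <= (lam k - t - 1) * T k t.+1) /\
  (forall r, r < mrow k -> leg k r.+1 * U k r + (0 < U k r) <= (lam k - r - 1) * T k r.+1).
Proof.
suff : forall n k, size la <= k + n -> 
  (forall t, t < mrow k -> hk k t * T k t <= (lam k - t - 1) * T k t.+1) /\
  (forall r, r < mrow k -> leg k r.+1 * U k r + (0 < U k r) <= (lam k - r - 1) * T k r.+1).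
  by move=> H; apply: (H (size la)); rewrite leq_addl.
elim => [|n IH] {}k Hk.
  have Hm : mrow k = 0 by rewrite /mrow /lam nth_default //; move: Hk; rewrite addn0; lia.
  by rewrite Hm.
have Hk' : size la <= k.+1 + n by rewrite addSnnS.
have [_ D1] := IH k.+1 Hk'.
have S := star_of D1.
by split => //; apply: dstar_of.
Qed.


End Excited.

End P1.
Import P1.

Section Top.
Variable la : seq nat.
Hypothesis Hpart : is_partition la.
Notation lam := (lam la).
Notation cell := (cellT la).

Lemma rimE i j : rim_cell la i j = (j < lam i) && ~~ (j.+1 < lam i.+1).
Proof.
rewrite /rim_cell !inDE.
have m1 := lam_mono Hpart (leqnSn i).
case: (ltnP j.+1 (lam i.+1)) => H /=.
  have -> : j < lam i.+1 by lia.
  have -> : j.+1 < lam i by lia.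
  by rewrite andbF.
case: (j < lam i) => //=.
by case: (j.+1 < lam i); case: (j < lam i.+1).
Qed.

Lemma Dmu_Z mu : muI la mu -> Dmu la mu = Z la 0.
Proof.
case=> _ H; apply/setP => x; rewrite !inE H rimE !inDE.
have m := lam_mono Hpart (leqnSn x.1).
case: (ltnP x.2.+1 (lam x.1.+1)) => H1 /=.
  by rewrite andbF andbT (leq_trans (ltnW H1) m).
by rewrite andbT andbN.
Qed.
Notation mrow := (mrow la).
Notation Rk := (@Rk la).
Notation W := (@W la).
Notation U := (U la).
Notation T := (T la).
Notation hk := (hk la).
Notation leg := (leg la).
Notation rowc := (@rowc la).
Notation dec := (@dec la).

Definition Mset r : {set cell} := [set x : cell | ((x.1 : nat) == 1) && (r < x.2 <= mrow 0)].
Definition W0 (D : {set cell}) := \prod_(c in D | (c.1 : nat) != 0) hook c.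

Lemma inS_M r a b : inS (Mset r) a b = (a == 1) && (r < b <= mrow 0).
Proof.
rewrite (inS_pred la (fun u v => (u == 1) && (r < v <= mrow 0))).
case H: ((a == 1) && (r < b <= mrow 0)); rewrite ?andbF // andbT.
case/andP: H => /eqP -> H; apply: (inD_box Hpart); move: H; rewrite /P1.mrow; lia.
Qed.

Lemma inS_filter0 (D : {set cell}) a b :
  inS [set c in D | (c.1 : nat) != 0] a b = inS D a b && (a != 0).
Proof.
apply/existsP/andP => [[x /and3P [Hx /eqP H1 /eqP H2]]|[/existsP [x /and3P [Hx H1 H2]] Ha]].
  move: Hx; rewrite inE -H1 => /andP [Hx ->]; split => //.
  by apply/existsP; exists x; rewrite Hx -H2 !eqxx.
by move/eqP: H1 => E1; exists x; rewrite inE Hx E1 Ha eqxx H2.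
Qed.
Lemma NNE mu j : muI la mu -> mrow 0 = sI la ->
  NN la mu j = W (Mset (mrow 0 - j)) * U 1 (mrow 0 - j).
Proof.
move=> Hmu Hs.
have -> : NN la mu j = \sum_(D | Rk 0 D && (rowc 0 D == mrow 0 - j)) W0 D.
  by rewrite /NN /excited Dmu_Z // Hs.
have Hr : mrow 0 - j <= mrow 0 by apply: leq_subr.
rewrite (sum_dec Hpart _ Hr) /U big_distrr; apply: eq_bigr => D' /andP [HR Hrow].
have /(colbound_rowc Hpart _ HR) Hc := Hrow.
have Hcl := Rk_cells Hpart HR.
have E : [set c in dec 0 (mrow 0 - j) D' | (c.1 : nat) != 0] = Mset (mrow 0 - j) :|: D'.
  apply: inS_ext => a b.
  rewrite inS_U inS_M inS_filter0 (DEC_dec Hpart _ Hr).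
  have Hd : inS D' a b -> a = 1 -> b < mrow 0 - j by move=> H E; apply: Hc; rewrite -E.
  have := Hcl a b; move: Hd; case: (inS D' a b) => /= H1 H2.
    have := H2 isT; have := H1 isT; lia.
  lia.
have E2 : Mset (mrow 0 - j) :&: D' = set0.
  apply/setP => x; rewrite in_setI in_set0 -!inS_mem inS_M.
  have := Hcl x.1 x.2.
  have Hd : inS D' x.1 x.2 -> (x.1 : nat) = 1 -> x.2 < mrow 0 - j by move=> H E1; apply: Hc; rewrite -E1.
  move: Hd; case: (inS D' x.1 x.2) => /= H1 H2; last by rewrite andbF.
  have := H2 isT; have := H1 isT; lia.
transitivity (W (Mset (mrow 0 - j)) * W D'); last by [].
rewrite -(W_U E2) -E /W0 /P1.W; apply: eq_bigl => c; by rewrite [in RHS]inE.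
Qed.
Lemma WM_step r : r < mrow 0 -> W (Mset r) = hk 1 r.+1 * W (Mset r.+1).
Proof.
move=> Hr.
have H1 : r.+1 < lam 1 by move: Hr; rewrite /P1.mrow; lia.
case/andP: (inD_box Hpart H1) => B1 B1'.
pose e := mkcell B1 B1'.
have He : hook e = hk 1 r.+1 by rewrite (hookE Hpart).
have Hn : e \notin Mset r.+1 by rewrite -inS_mem inS_M /= ltnn.
have -> : Mset r = e |: Mset r.+1.
  apply: inS_ext => a b.
  rewrite -set1_coord inS_U !inS_M.
  rewrite (inS_pred la (fun u v => (u == _) && (v == _))).
  case: (eqVneq a 1) => [->|Na]; case: (eqVneq b r.+1) => [->|Nb]; rewrite ?B1 ?B1' /=; move: Hr; rewrite /P1.mrow; lia.

by rewrite W_set1 // He.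
Qed.

Lemma WM_pos r : 0 < W (Mset r).
Proof.
apply: (W_pos Hpart) => a b; rewrite inS_M => /andP [/eqP -> H].
move: H; rewrite /P1.mrow; lia.
Qed.

Lemma wIE : lam 0 = lam 1 -> 0 < lam 0 -> wI la = lam 0 - lam 2.
Proof.
move=> H01 H0.
have Hs : (sI la).+1 = lam 0 by rewrite /sI; move: H0; rewrite /P1.lam; lia.
have H2 : lam 2 <= lam 0 by apply: (lam_mono Hpart).
rewrite /wI Hs.
have Hc : forall j, j < lam 0 -> (conj_part la j == 2) = (lam 2 <= j < lam 0).
  move=> j Hj; rewrite Hj andbT /conj_part.
  have Hsz : 1 < size la by apply: (lam_size (la:=la) (i:=1)); rewrite -H01.
  move: H01 Hj Hsz; rewrite /P1.lam.
  case: la Hpart => [|a0 [|a1 rest]] //= Hp H01 Hj _.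
  rewrite -H01 Hj /= !add1n !eqSS.
  case: rest Hp => [|x rest'] Hp /=; first by [].
  case: (ltnP j x) => Hjx /=; first by rewrite add1n.
  rewrite add0n eqn0Ngt -has_count; apply/hasPn => y Hy; rewrite -leqNgt.
  case/(nthP 0): Hy => i Hi <-.
  have := lam_mono Hp (i := 2) (j := i.+3) isT; rewrite /P1.lam /=; lia.
rewrite (eq_in_count (a2 := fun z => lam 2 <= z < lam 0)); last first.
  by move=> z; rewrite mem_iota add0n => /andP [_ /Hc].
rewrite (count_iota_int Hpart); lia.
Qed.
Lemma N_rec mu j : muI la mu -> lam 0 = lam 1 -> 0 < j <= sI la ->
  (j <= wI la -> NN la mu j = j * NN la mu j.-1) /\
  (wI la < j -> NN la mu j + (0 < NN la mu j) <= j * NN la mu j.-1).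
Proof.
move=> Hmu H01 /andP [Hj0 Hjs].
have Hs : mrow 0 = sI la by rewrite /P1.mrow /sI -H01.
have H0 : 0 < lam 0 by move: Hjs; rewrite /sI /P1.lam; lia.
have Hm0 : mrow 0 = (lam 0).-1 by rewrite /P1.mrow H01.
rewrite !(NNE _ Hmu Hs).
set r := mrow 0 - j.
have Hr : mrow 0 - j.-1 = r.+1 by rewrite /r; move: Hjs; rewrite -Hs; lia.
rewrite Hr.
have Hrm : r < mrow 0 by rewrite /r; move: Hjs; rewrite -Hs; lia.
rewrite (WM_step Hrm).
have Hhk : hk 1 r.+1 = j + leg 1 r.+1.
  rewrite /P1.hk; move: Hjs Hm0; rewrite -Hs /r -H01; lia.
rewrite Hhk (wIE H01 H0) (U_S Hpart).
have Wp := WM_pos r.+1.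
set Wm := W (Mset r.+1).
set UU := U 1 r.
set TT := T 1 r.+1.
split => Hw.
  have Hl2 : lam 2 <= r.+1 by move: Hw Hm0; rewrite /r; lia.
  rewrite (leg_zero Hpart Hl2) /TT (T_out Hpart); last by rewrite /P1.mrow; lia.
  by rewrite !addn0 mulnA.
have Hrm1 : r < mrow 1 by rewrite /P1.mrow; move: Hw Hm0; rewrite /r; lia.
case: (main_rec Hpart 1) => _ D.
have := D r Hrm1.
have -> : lam 1 - r - 1 = j by move: Hjs Hm0; rewrite -Hs /r -H01; lia.
rewrite -/UU -/TT.
set l := leg 1 r.+1.
have B : ((0 < (j + l) * Wm * UU) : nat) <= Wm * (0 < UU).
  case: (posnP UU) => [->|HU]; first by rewrite !muln0.
  by rewrite muln1; apply: leq_trans (leq_b1 _) Wp.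
move: B; nia.
Qed.
Lemma U_pos : 0 < U 1 (mrow 0).
Proof.
have HZ : Rk 1 (Z la 1) by rewrite /P1.Rk connect0.
rewrite /P1.U (bigD1 (Z la 1)) /=; last first.
  rewrite HZ /=; apply: leq_trans (rowc_le Hpart HZ) _.
  have := lam_mono Hpart (i:=1) (j:=2) isT; rewrite /P1.mrow; lia.
apply: leq_trans (leq_addr _ _).
by apply: (W_pos Hpart) => a b /(Rk_cells Hpart HZ) /andP [].
Qed.
End Top.

Local Open Scope ring_scope.
Import GRing.Theory Num.Theory.

Theorem corollary4p6 (I : {fset nat}) (la mu : seq nat) (a b : nat) :
  I != fset0 -> (forall i, i \in I -> (0 < i)%N) ->
  lambdaI I la -> muI la mu ->
  (a < b)%N -> (b <= sI la)%N ->
  ((NN la mu a)%:R / (NN la mu b)%:R = (a`!)%:R / (b`!)%:R :> rat)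
    <-> (b <= wI la)%N.
Proof.
move=> _ _ [Hpart H01 _] Hmu Hab Hbs.
have H01' : lam la 0 = lam la 1 by [].
have Hrec := N_rec Hpart Hmu H01'.
set N := NN la mu in Hrec *.
have Hs : mrow la 0 = sI la by rewrite /P1.mrow /sI /P1.lam H01.
have N0 : (0 < N 0)%N.
  rewrite /N (NNE Hpart _ Hmu Hs) subn0.
  by rewrite muln_gt0 WM_pos // U_pos.
have Hweak : forall j, (0 < j <= sI la)%N -> (N j <= j * N j.-1)%N.
  move=> j Hj; case: (leqP j (wI la)) => Hw.
    by rewrite ((Hrec j Hj).1 Hw).
  by apply: leq_trans (leq_addr _ _) ((Hrec j Hj).2 Hw).
have Hchain : forall d, (a + d <= sI la)%N -> (N (a + d) * a`! <= (a + d)`! * N a)%N.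
  elim => [|d IH] Hd; first by rewrite addn0 mulnC.
  rewrite addnS in Hd *.
  have H1 : (N (a + d).+1 <= (a + d).+1 * N (a + d))%N by apply: Hweak; rewrite Hd.
  have H2 := IH (ltnW Hd).
  rewrite factS -mulnA.
  apply: leq_trans (leq_mul H1 (leqnn _)) _.
  by rewrite -mulnA leq_mul2l H2 orbT.
split => [Heq|Hw].
  case: (leqP b (wI la)) => // Hw; exfalso.
  have Nb : (0 < N b)%N.
    case: (posnP (N b)) => // Nb0; move: Heq; rewrite Nb0 invr0 mulr0 => /esym/eqP.
    by rewrite mulf_eq0 invr_eq0 !pnatr_eq0 !eqn0Ngt !fact_gt0.
  have/eqP := Heq; rewrite eqr_div ?pnatr_eq0 -?lt0n ?fact_gt0 ?Nb // -!natrM eqr_nat => /eqP E.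
  have Hb0 : (0 < b <= sI la)%N by rewrite Hbs andbT; apply: leq_ltn_trans (leq0n a) Hab.
  have Hst := (Hrec b Hb0).2 Hw.
  rewrite Nb in Hst.
  have Hab1 : (a + (b.-1 - a) = b.-1)%N by move: Hab; lia.
  have Hc := Hchain (b.-1 - a)%N; rewrite Hab1 in Hc.
  have Hc' := Hc (leq_trans (leq_pred b) Hbs).
  have Hbf : (b`! = b * (b.-1)`!)%N by case: b Hab {Hbs Hw Hst Hb0 Hab1 Hc Hc' E Nb Heq} => // b' _; rewrite factS.
  rewrite Hbf in E.
  have h1 := leq_mul Hst (leqnn a`!).
  have h2 := leq_mul (leqnn b) Hc'.
  have Hfa := fact_gt0 a.
  move: h1 h2 E Hfa; rewrite addn1.
  move=> h1 h2 E Hfa.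
  have e1 : (b * N b.-1 * a`! = b * (N b.-1 * a`!))%N by rewrite mulnA.
  have e2 : (b * ((b.-1)`! * N a) = N a * (b * (b.-1)`!))%N by rewrite [RHS]mulnC mulnA.
  have : ((N b).+1 * a`! <= a`! * N b)%N.
    by rewrite -E -e2; apply: leq_trans h1 _; rewrite e1.
  rewrite mulSn (mulnC (N b)) => H; move: Hfa H; lia.
have Hf : forall j, (j <= b)%N -> N j = (j`! * N 0)%N.
  elim => [_|j IH Hj]; first by rewrite fact0 mul1n.
  have Hj' : (0 < j.+1 <= sI la)%N by rewrite /= (leq_trans Hj Hbs).
  rewrite ((Hrec j.+1 Hj').1 (leq_trans Hj Hw)) /= IH ?factS ?mulnA //.
  exact: ltnW.
have HN0 : (N 0)%:R != 0 :> rat by rewrite pnatr_eq0 -lt0n N0.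
rewrite (Hf a (ltnW Hab)) (Hf b (leqnn b)) !natrM -mulf_div (divff HN0) mulr1.
by [].
Qed.
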